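(* Let $n\ge 1$, $m\ge 2$, $0\le k\le n-1$ with $(m,k)\ne(2,0)$. Then the class $\mathcal{C}^k_{ac}$ of all complete $k$-bounded acyclic CP-nets over $n$ variables of domain size $m$, over the instance space $\mathcal{X}_{swap}$ (for any admissible choice of $\mathcal{X}_{swap}$), is not intersection-closed.
   Context: Variables $V=\{v_1,\dots,v_n\}$, each with a finite domain of size $m$. An outcome assigns a value to every variable; $\mathcal{O}_X$ denotes assignments to $X\subseteq V$. A complete CP-net specifies for each $v_i$ a parent set $Pa(v_i)\subseteq V\setminus\{v_i\}$ and, for each context $\gamma\in\mathcal{O}_{Pa(v_i)}$, a strict total order $\succ^{v_i}_\gamma$ on $D_{v_i}$; parents are non-dummy. Acyclic: graph with edges $(v_j,v_i)$, $v_j\in Pa(v_i)$, acyclic; $k$-bounded: all $|Pa(v_i)|\le k$. Improving flip: changing only $v_i$ to a value preferred under $\succ^{v_i}_{o[Pa(v_i)]}$; $o'\succ o$ iff a nonempty sequence of improving flips leads from $o$ to $o'$. A swap is an ordered pair $x=(x.1,x.2)$ of outcomes differing in exactly one variable; $\mathcal{X}_{swap}$ is any set containing exactly one of the two orderings of each such pair (an admissible choice). A CP-net $N$ is the concept $c_N=\{x\in\mathcal{X}_{swap}: x.1\succ x.2\text{ under }N\}$. A class $\mathcal{C}$ of concepts (subsets of the instance space) is intersection-closed if $c\cap c'\in\mathcal{C}$ for all $c,c'\in\mathcal{C}$. *)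

(* Defs.v *)
From mathcomp Require Import all_boot.
Set Implicit Arguments. Unset Strict Implicit. Unset Printing Implicit Defensive.

Definition outcome (n m : nat) := {ffun 'I_n -> 'I_m}.

(* A CP-net: parent sets and, for every variable i and outcome o, the
   conditional preference relation  pref i o x y  meaning  x >_{o[Pa(i)]} y.
   Well-formedness (below) requires pref i o to depend only on o[Pa(i)],
   so pref i is exactly a family of orders indexed by contexts. *)
Record cpnet (n m : nat) := CPNet {
  pa : 'I_n -> {set 'I_n};
  pref : 'I_n -> outcome n m -> rel 'I_m
}.

Definition strict_total_order (m : nat) (r : rel 'I_m) : Prop :=
  (forall x, ~~ r x x) /\
  (forall x y z, r x y -> r y z -> r x z) /\
  (forall x y, x != y -> r x y || r y x).

Definition is_cpnet n m (N : cpnet n m) : Prop :=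
  (forall i, i \notin pa N i) /\
  (forall i (o o' : outcome n m),
      (forall j, j \in pa N i -> o j = o' j) ->
      forall x y, pref N i o x y = pref N i o' x y) /\
  (forall i o, strict_total_order (pref N i o)) /\
  (forall i j, j \in pa N i ->
      exists (o o' : outcome n m),
        (forall l, l != j -> o l = o' l) /\
        exists x y, pref N i o x y != pref N i o' x y).

Definition acyclic n m (N : cpnet n m) : Prop :=
  forall i (p : seq 'I_n),
    path (fun a b => a \in pa N b) i p -> last i p = i -> p = [::].

Definition k_bounded n m (k : nat) (N : cpnet n m) : Prop :=
  forall i, #|pa N i| <= k.

Definition flip n m (N : cpnet n m) : rel (outcome n m) :=
  fun o o' => [exists i, [forall j, (j != i) ==> (o j == o' j)]
                         && pref N i o (o' i) (o i)].

(* better N o' o  :  o' > o, i.e. a nonempty sequence of improving flips leads from o to o' *)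
Definition better n m (N : cpnet n m) (o' o : outcome n m) : bool :=
  [exists o1, flip N o o1 && connect (flip N) o1 o'].

Definition is_swap n m (x : outcome n m * outcome n m) : bool :=
  #|[set i | x.1 i != x.2 i]| == 1.

Definition admissible_Xswap n m (X : {set outcome n m * outcome n m}) : Prop :=
  (forall x, x \in X -> is_swap x) /\
  (forall x, is_swap x -> ((x.1, x.2) \in X) != ((x.2, x.1) \in X)).

Definition concept n m (X : {set outcome n m * outcome n m}) (N : cpnet n m)
  : {set outcome n m * outcome n m} :=
  [set x in X | better N x.1 x.2].

Definition C_ac n m k (X : {set outcome n m * outcome n m})
  (c : {set outcome n m * outcome n m}) : Prop :=
  exists N : cpnet n m, [/\ is_cpnet N, acyclic N, k_bounded k N & c = concept X N].

Definition intersection_closed (T : finType) (C : {set T} -> Prop) : Prop :=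
  forall c c', C c -> C c' -> C (c :&: c').

(* Main.v *)
Require Import Defs.
From mathcomp Require Import all_boot zify.
Set Implicit Arguments. Unset Strict Implicit. Unset Printing Implicit Defensive.

Lemma flip_better n m (N : cpnet n m) o o' : flip N o o' -> better N o' o.
Proof. by move=> h; apply/existsP; exists o'; rewrite h connect0. Qed.

Lemma better_trans n m (N : cpnet n m) a b c :
  better N a b -> better N b c -> better N a c.
Proof.
case/existsP=> o1 /andP [f1 c1]; case/existsP=> o2 /andP [f2 c2].
apply/existsP; exists o2; rewrite f2 /=.
apply: connect_trans c2 _; apply: connect_trans _ c1; exact: connect1.
Qed.

Lemma mono n m (N : cpnet n m) (HN : is_cpnet N) i (o : outcome n m) a s :
  path (flip N) a s -> (forall c, c \in a :: s -> forall j, j \in pa N i -> c j = o j) ->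
  ((last a s) i == a i) || pref N i o (last a s i) (a i).
Proof.
case: HN => _ [Hdep [Hsto _]].
have [Hirr [Htr Htot]] := Hsto i o.
elim: s a => [|b s IH] a /=; first by rewrite eqxx.
case/andP=> /existsP [v /andP [/forallP Hv Hp]] Hpath Hagree.
have Hb : (b i == a i) || pref N i o (b i) (a i).
  case: (eqVneq v i) => [hvi|hvi].
    subst v; rewrite -(Hdep i a o) ?Hp ?orbT // => j hj.
    by apply: (Hagree a) => //; rewrite mem_head.
  by move: (Hv i); rewrite eq_sym hvi /= => /eqP ->; rewrite eqxx.
have := IH b Hpath.
case/(_ _)/orP=> [c hc|/eqP ->|h1] //.
  by apply: Hagree; rewrite inE hc orbT.
case/orP: Hb => [/eqP <-|h2]; first by rewrite h1 orbT.
by rewrite (Htr _ _ _ h1 h2) orbT.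
Qed.


Definition pedge n m (N : cpnet n m) : rel 'I_n := fun a b => a \in pa N b.
Definition anc n m (N : cpnet n m) i :=
  [set j | [exists p in pa N i, connect (pedge N) j p]].

Lemma anc_lt n m (N : cpnet n m) (HA : acyclic N) i j :
  j \in pa N i -> #|anc N j| < #|anc N i|.
Proof.
move=> hj; apply: proper_card; rewrite properE; apply/andP; split.
  apply/subsetP=> x; rewrite !inE => /existsP [p /andP [hp hc]].
  apply/existsP; exists j; rewrite hj /=.
  by apply: connect_trans hc _; apply: connect1.
apply/subsetPn; exists j.
  by rewrite inE; apply/existsP; exists j; rewrite hj connect0.
rewrite inE; apply/negP => /existsP [p /andP [hp /connectP [s hs hl]]].
have := HA j (rcons s j).
rewrite last_rcons rcons_path hs -hl hp => /(_ isT erefl).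
by case: s {hs hl}.
Qed.

Definition cyc_inv n m (N : cpnet n m) i :=
  forall o s, path (flip N) o s -> last o s = o -> forall c, c \in s -> c i = o i.

Lemma cyc_inv_all n m (N : cpnet n m) (HN : is_cpnet N) (HA : acyclic N) i :
  cyc_inv N i.
Proof.
have [Hnot [Hdep [Hsto _]]] := HN.
suff: forall k i, #|anc N i| < k -> cyc_inv N i by apply; apply: ltnSn.
elim=> [//|k IH] {}i hk o s hp hl.
have Hag : forall c, c \in o :: s -> forall j, j \in pa N i -> c j = o j.
  move=> c; rewrite inE => /orP [/eqP -> //|hc] j hj.
  apply: (IH j _ o s hp hl c hc).
  by rewrite -ltnS; apply: leq_trans hk; apply: anc_lt.
move=> c hc.
have [Hirr [Htr _]] := Hsto i o.
case/path.splitP: hc hp hl Hag => p1 p2.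
rewrite cat_path last_cat last_rcons => /andP [hp1 hp2] hl Hag.
have m1 : (c i == o i) || pref N i o (c i) (o i).
  have := @mono _ _ N HN i o _ _ hp1; rewrite last_rcons; apply.
  by move=> d hd; apply: Hag; rewrite -cat_cons mem_cat hd.
have m2 : (o i == c i) || pref N i o (o i) (c i).
  have := @mono _ _ N HN i o _ _ hp2; rewrite hl; apply.
  move=> d hd; apply: Hag; rewrite inE mem_cat.
  by move: hd; rewrite inE => /orP [/eqP ->|->]; rewrite ?mem_rcons ?mem_head ?orbT.
case/orP: m1 => [/eqP //|r1].
case/orP: m2 => [/eqP //|r2].
by have := Hirr (o i); rewrite (Htr _ _ _ r2 r1).
Qed.

Lemma consistent n m (N : cpnet n m) (HN : is_cpnet N) (HA : acyclic N) o :
  ~~ better N o o.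
Proof.
apply/negP => /existsP [o1 /andP [hf /connectP [s hs hl]]].
have hinv : forall i, o1 i = o i.
  move=> i; apply: (@cyc_inv_all _ _ N HN HA i o (o1 :: s)) => //=.
  - by rewrite hf hs.
  - by rewrite mem_head.
have eo : o1 = o by apply/ffunP.
subst o1.
case/existsP: hf => v /andP [_ hp].
have [_ [_ [Hsto _]]] := HN.
have [Hirr _] := Hsto v o.
by rewrite (negbTE (Hirr _)) in hp.
Qed.


Lemma dir_gen n m (N : cpnet n m) (HN : is_cpnet N) (s t : outcome n m) i :
  s i != t i -> (forall j, j != i -> s j = t j) ->
  if pref N i t (s i) (t i) then better N s t else better N t s.
Proof.
move=> hne hag.
have [Hnot [Hdep [Hsto _]]] := HN.
case: ifP => hp.
  apply: flip_better; apply/existsP; exists i; rewrite hp andbT.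
  by apply/forallP => j; apply/implyP => hj; rewrite hag.
have [_ [_ Htot]] := Hsto i t.
have := Htot _ _ hne; rewrite hp /= => hp'.
apply: flip_better; apply/existsP; exists i; apply/andP; split.
  by apply/forallP => j; apply/implyP => hj; rewrite hag.
rewrite (Hdep i s t) //.
move=> j hj; apply: hag; apply/eqP => eji; subst j.
by move: (Hnot i); rewrite hj.
Qed.

Lemma swap_is_swap n m (s t : outcome n m) i :
  s i != t i -> (forall j, j != i -> s j = t j) -> is_swap (s, t).
Proof.
move=> hne hag; rewrite /is_swap /=.
suff -> : [set j | s j != t j] = [set i] by rewrite cards1.
apply/setP => j; rewrite !inE.
case: (eqVneq j i) => [->|hj]; first by rewrite hne.
by rewrite hag // eqxx.
Qed.

Lemma edge_core n m (N N1 N2 : cpnet n m) X (s t : outcome n m) i (b1 b2 : bool) :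
  is_cpnet N -> is_cpnet N1 -> acyclic N1 -> is_cpnet N2 -> acyclic N2 ->
  admissible_Xswap X -> concept X N = concept X N1 :&: concept X N2 ->
  s i != t i -> (forall j, j != i -> s j = t j) ->
  (b1 -> better N1 s t) -> (b2 -> better N2 s t) ->
  (if (s, t) \in X then b1 && b2 else b1 || b2) ->
  better N s t.
Proof.
move=> HN HN1 HA1 HN2 HA2 [HX1 HX2] Hc hne hag hb1 hb2.
have hsw := swap_is_swap hne hag.
case: ifP => hX.
  case/andP=> /hb1 h1 /hb2 h2.
  have : (s, t) \in concept X N by rewrite Hc !inE hX h1 h2.
  by rewrite inE => /andP [].
have hX' : (t, s) \in X.
  by have := HX2 _ hsw; rewrite /= hX; case: ((t, s) \in X).
have nb1 : b1 -> ~~ better N1 t s.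
  move=> h; apply/negP => h'.
  by have := consistent HN1 HA1 s; rewrite (better_trans (hb1 h) h').
have nb2 : b2 -> ~~ better N2 t s.
  move=> h; apply/negP => h'.
  by have := consistent HN2 HA2 s; rewrite (better_trans (hb2 h) h').
move=> hor.
have Hnot : (t, s) \notin concept X N.
  rewrite Hc !inE hX' /=.
  by case/orP: hor => [/nb1 /negbTE ->|/nb2 /negbTE ->]; rewrite ?andbF.
have := dir_gen HN hne hag.
case: ifP => // _ hb.
by move: Hnot; rewrite inE hX' hb.
Qed.

Definition okE (c d1 d2 xb : bool) :=
  if (if c then xb else ~~ xb) then d1 && d2 else d1 || d2.

Lemma edge_lemma n m (N N1 N2 : cpnet n m) X (s t : outcome n m) i c p1 p2 :
  is_cpnet N -> is_cpnet N1 -> acyclic N1 -> is_cpnet N2 -> acyclic N2 ->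
  admissible_Xswap X -> concept X N = concept X N1 :&: concept X N2 ->
  s i != t i -> (forall j, j != i -> s j = t j) ->
  pref N1 i t (s i) (t i) = p1 -> pref N2 i t (s i) (t i) = p2 ->
  okE c (p1 == c) (p2 == c) ((s, t) \in X) ->
  better N (if c then s else t) (if c then t else s).
Proof.
move=> HN HN1 HA1 HN2 HA2 HX Hc hne hag e1 e2.
have d1 := dir_gen HN1 hne hag; have d2 := dir_gen HN2 hne hag.
rewrite e1 in d1; rewrite e2 in d2.
case: c => ok.
  apply: (edge_core (b1 := p1 == true) (b2 := p2 == true) HN HN1 HA1 HN2 HA2 HX Hc hne hag) => //.
  - by move/eqP => h; rewrite h in d1.
  - by move/eqP => h; rewrite h in d2.
have hne' : t i != s i by rewrite eq_sym.
have hag' : forall j, j != i -> t j = s j by move=> j hj; rewrite hag.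
apply: (edge_core (b1 := p1 == false) (b2 := p2 == false) HN HN1 HA1 HN2 HA2 HX Hc hne' hag').
- by move/eqP => h; rewrite h in d1.
- by move/eqP => h; rewrite h in d2.
have [_ HX2] := HX.
have := HX2 _ (swap_is_swap hne hag); rewrite /=.
by move: ok; rewrite /okE; case: ((s, t) \in X); case: ((t, s) \in X).
Qed.


Definition rankS (s : seq nat) (x : nat) := if x < size s then nth 0 s x else x.
Definition ordRS m (s : seq nat) : rel 'I_m := fun x y => rankS s y < rankS s x.
Definition validS (s : seq nat) := uniq s && all (fun t => t < size s) s.

Lemma rankS_inj s x y : validS s -> rankS s x = rankS s y -> x = y.
Proof.
case/andP=> hu /allP ha; rewrite /rankS.
have hb : forall z, z < size s -> nth 0 s z < size s by move=> z hz; apply/ha/mem_nth.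
case: ifP => hx; case: ifP => hy.
- by move/eqP; rewrite nth_uniq // => /eqP.
- by move=> e; have := hb _ hx; rewrite e hy.
- by move=> e; have := hb _ hy; rewrite -e hx.
- by [].
Qed.

Lemma ordRS_sto m s : validS s -> strict_total_order (@ordRS m s).
Proof.
move=> hv; split; first by move=> x; rewrite /ordRS ltnn.
split; first by move=> x y z h1 h2; rewrite /ordRS (ltn_trans h2 h1).
move=> x y hxy; rewrite /ordRS.
case: (ltngtP (rankS s y) (rankS s x)) => // e.
have /val_inj exy : nat_of_ord x = nat_of_ord y by apply: rankS_inj hv (esym e).
by rewrite exy eqxx in hxy.
Qed.

Definition GNet n m (pa : 'I_n -> {set 'I_n}) (L : 'I_n -> outcome n m -> seq nat) : cpnet n m :=
  CPNet pa (fun i o => @ordRS m (L i o)).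

Lemma GNet_cpnet n m (pa : 'I_n -> {set 'I_n}) (L : 'I_n -> outcome n m -> seq nat) :
  (forall i, i \notin pa i) ->
  (forall i (o o' : outcome n m), (forall j, j \in pa i -> o j = o' j) -> L i o = L i o') ->
  (forall i o, validS (L i o)) ->
  (forall i j, j \in pa i -> exists (o o' : outcome n m),
      (forall l, l != j -> o l = o' l) /\
      exists x y, @ordRS m (L i o) x y != @ordRS m (L i o') x y) ->
  is_cpnet (GNet pa L).
Proof.
move=> h1 h2 h3 h4; split=> //; split.
  by move=> i o o' h x y /=; rewrite (h2 i o o' h).
split=> //; move=> i o; exact: ordRS_sto.
Qed.

Definition netA n m (P : 'I_n) (s : seq nat) : cpnet n m :=
  GNet (fun _ => set0) (fun i (_ : outcome n m) => if i == P then s else [::]).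

Lemma netA_ok n m (P : 'I_n) s k : validS s ->
  [/\ is_cpnet (netA m P s), acyclic (netA m P s) & k_bounded k (netA m P s)].
Proof.
move=> hv; split.
- apply: GNet_cpnet.
  + by move=> i; rewrite inE.
  + by [].
  + by move=> i o; case: (i == P).
  + by move=> i j; rewrite inE.
- by move=> i [|x p] //=; rewrite inE.
- by move=> i /=; rewrite cards0.
Qed.

Definition bl (b : bool) : seq nat := if b then [:: 0; 1] else [:: 1; 0].
Definition dirbit n m (P Q : 'I_n) (bp b0 : bool) (i : 'I_n) (o : outcome n m) :=
  if i == Q then (if nat_of_ord (o P) == 0 then b0 else ~~ b0)
  else if i == P then bp else true.
Definition netB n m (P Q : 'I_n) (bp b0 : bool) : cpnet n m :=
  GNet (fun i => if i == Q then [set P] else set0)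
       (fun i o => bl (dirbit P Q bp b0 i o)).

Lemma netB_ok n m (P Q : 'I_n) bp b0 k (o0 o1 : 'I_m) :
  P != Q -> nat_of_ord o0 = 0 -> nat_of_ord o1 = 1 -> 1 <= k ->
  [/\ is_cpnet (@netB n m P Q bp b0), acyclic (@netB n m P Q bp b0) & k_bounded k (@netB n m P Q bp b0)].
Proof.
move=> hPQ h0 h1 hk; split.
- apply: GNet_cpnet.
  + move=> i; case: ifP => [/eqP ->|]; last by rewrite inE.
    by rewrite inE eq_sym.
  + move=> i o o' h; rewrite /dirbit; case: ifP => // /eqP hi; subst i.
    by rewrite h // eqxx inE.
  + by move=> i o; case: (dirbit _ _ _ _ _ _).
  + move=> i j; case: ifP => [/eqP -> |]; last by rewrite inE.
    rewrite inE => /eqP ->.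
    exists [ffun _ => o0], [ffun l => if l == P then o1 else o0]; split.
      by move=> l hl; rewrite !ffunE (negbTE hl).
    exists o1, o0; rewrite /dirbit eqxx !ffunE eqxx h0 h1 /=.
    by rewrite /ordRS h0 h1; case: b0.
- move=> i [|x [|y p]] //=.
    case: ifP => [/eqP ->|]; last by rewrite inE.
    by rewrite inE andbT => /eqP -> hQP; move: hPQ; rewrite hQP eqxx.
  case: ifP => [/eqP ->|]; last by rewrite inE.
  by case: ifP => _; rewrite !inE ?(eq_sym Q P) ?(negbTE hPQ) ?andbF.
- move=> i /=; case: ifP => _; by rewrite ?cards1 ?cards0.
Qed.


Definition perms3 : seq (seq nat) :=
  [:: [::0;1;2]; [::0;2;1]; [::1;0;2]; [::1;2;0]; [::2;0;1]; [::2;1;0]].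
Definition prefM (s : seq nat) (x y : nat) := rankS s y < rankS s x.

Lemma perms3_valid s : s \in perms3 -> validS s.
Proof. by rewrite !inE => /orP [/eqP ->|/orP [/eqP ->|/orP [/eqP ->|/orP [/eqP ->|/orP [/eqP ->|/eqP ->]]]]]. Qed.

Lemma checkA (xb1 xb2 xb3 : bool) :
  has (fun c => has (fun s1 => has (fun s2 =>
    [&& okE c (prefM s1 0 1 == c) (prefM s2 0 1 == c) xb1,
        okE c (prefM s1 1 2 == c) (prefM s2 1 2 == c) xb2 &
        okE c (prefM s1 2 0 == c) (prefM s2 2 0 == c) xb3]) perms3) perms3) [:: true; false].
Proof. by case: xb1; case: xb2; case: xb3; vm_compute. Qed.

Definition paramsB : seq (bool * bool * bool) :=
  [:: (true, true, true); (true, true, false); (true, false, true); (true, false, false);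
      (false, true, true); (false, true, false); (false, false, true); (false, false, false)].
Definition dirB (p : bool * bool * bool) (v zP zQ : bool) : bool :=
  let: (kind, bp, b0) := p in
  if kind then (if v then (if ~~ zP then b0 else ~~ b0) else bp)
  else (if v then bp else (if ~~ zQ then b0 else ~~ b0)).
Definition prefB p v zP zQ x y := prefM (bl (dirB p v zP zQ)) x y.

Lemma checkB (xb1 xb2 xb3 xb4 : bool) :
  has (fun c => has (fun p1 => has (fun p2 =>
    [&& okE c (prefB p1 false true false 0 1 == c) (prefB p2 false true false 0 1 == c) xb1,
        okE c (prefB p1 true true true 0 1 == c) (prefB p2 true true true 0 1 == c) xb2,
        okE c (prefB p1 false false true 1 0 == c) (prefB p2 false false true 1 0 == c) xb3 &
        okE c (prefB p1 true false false 1 0 == c) (prefB p2 true false false 1 0 == c) xb4])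
    paramsB) paramsB) [:: true; false].
Proof. by case: xb1; case: xb2; case: xb3; case: xb4; vm_compute. Qed.


Lemma caseA n m k (X : {set outcome n m * outcome n m}) (P : 'I_n) (o0 o1 o2 : 'I_m) :
  nat_of_ord o0 = 0 -> nat_of_ord o1 = 1 -> nat_of_ord o2 = 2 ->
  admissible_Xswap X -> ~ intersection_closed (C_ac k X).
Proof.
move=> h0 h1 h2 HX Hic.
pose tri (z : 'I_m) : outcome n m := [ffun j => if j == P then z else o0].
have triP z : tri z P = z by rewrite ffunE eqxx.
have sw1 z z' : nat_of_ord z != nat_of_ord z' -> tri z P != tri z' P.
  by rewrite !triP => h; apply/eqP => e; rewrite e eqxx in h.
have sw2 z z' : forall j, j != P -> tri z j = tri z' j.
  by move=> j hj; rewrite !ffunE (negbTE hj).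
have pA s z z' a b : nat_of_ord z = a -> nat_of_ord z' = b ->
    pref (netA m P s) P (tri z') (tri z P) (tri z' P) = prefM s a b.
  by move=> ha hb; rewrite /= eqxx /ordRS /prefM !triP ha hb.
have := checkA ((tri o0, tri o1) \in X) ((tri o1, tri o2) \in X) ((tri o2, tri o0) \in X).
case/hasP => c _ /hasP [s1 hs1 /hasP [s2 hs2 /and3P [e1 e2 e3]]].
have [HN1 HA1 HK1] := netA_ok m P k (perms3_valid hs1).
have [HN2 HA2 HK2] := netA_ok m P k (perms3_valid hs2).
have [N [HN HA _ Hc]] := Hic _ _ (ex_intro _ _ (And4 HN1 HA1 HK1 erefl))
                                 (ex_intro _ _ (And4 HN2 HA2 HK2 erefl)).
have n01 : nat_of_ord o0 != o1 by rewrite h0 h1.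
have n12 : nat_of_ord o1 != o2 by rewrite h1 h2.
have n20 : nat_of_ord o2 != o0 by rewrite h2 h0.
have b1 := edge_lemma HN HN1 HA1 HN2 HA2 HX (esym Hc)
  (sw1 o0 o1 n01) (sw2 o0 o1) (pA s1 o0 o1 0 1 h0 h1) (pA s2 o0 o1 0 1 h0 h1) e1.
have b2 := edge_lemma HN HN1 HA1 HN2 HA2 HX (esym Hc)
  (sw1 o1 o2 n12) (sw2 o1 o2) (pA s1 o1 o2 1 2 h1 h2) (pA s2 o1 o2 1 2 h1 h2) e2.
have b3 := edge_lemma HN HN1 HA1 HN2 HA2 HX (esym Hc)
  (sw1 o2 o0 n20) (sw2 o2 o0) (pA s1 o2 o0 2 0 h2 h0) (pA s2 o2 o0 2 0 h2 h0) e3.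
have := consistent HN HA (tri o0).
case: c b1 b2 b3 {e1 e2 e3} => /= b1 b2 b3.
  by rewrite (better_trans b1 (better_trans b2 b3)).
by rewrite (better_trans b3 (better_trans b2 b1)).
Qed.

Lemma caseB n m k (X : {set outcome n m * outcome n m}) (P0 Q0 : 'I_n) (o0 o1 : 'I_m) :
  P0 != Q0 -> nat_of_ord o0 = 0 -> nat_of_ord o1 = 1 -> 1 <= k ->
  admissible_Xswap X -> ~ intersection_closed (C_ac k X).
Proof.
move=> hPQ h0 h1 hk HX Hic.
have hQP : Q0 != P0 by rewrite eq_sym.
pose bo (z : bool) := if z then o1 else o0.
have bov z : nat_of_ord (bo z) = z by case: z.
pose sq (zP zQ : bool) : outcome n m :=
  [ffun j => if j == P0 then bo zP else if j == Q0 then bo zQ else o0].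
have sqP zP zQ : sq zP zQ P0 = bo zP by rewrite ffunE eqxx.
have sqQ zP zQ : sq zP zQ Q0 = bo zQ by rewrite ffunE eqxx (negbTE hQP).
have sqPv zP zQ : nat_of_ord (sq zP zQ P0) = zP by rewrite sqP bov.
have sqQv zP zQ : nat_of_ord (sq zP zQ Q0) = zQ by rewrite sqQ bov.
have swP zQ : sq false zQ P0 != sq true zQ P0 /\ sq true zQ P0 != sq false zQ P0.
  by rewrite !sqP; split; apply/eqP => /(congr1 (@nat_of_ord m)); rewrite !bov.
have swQ zP : sq zP false Q0 != sq zP true Q0 /\ sq zP true Q0 != sq zP false Q0.
  by rewrite !sqQ; split; apply/eqP => /(congr1 (@nat_of_ord m)); rewrite !bov.
have agP z z' zQ : forall j, j != P0 -> sq z zQ j = sq z' zQ j.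
  by move=> j hj; rewrite !ffunE (negbTE hj).
have agQ zP z z' : forall j, j != Q0 -> sq zP z j = sq zP z' j.
  by move=> j hj; rewrite !ffunE (negbTE hj); case: (j == P0).
pose netBp (p : bool * bool * bool) : cpnet n m :=
  if p.1.1 then @netB n m P0 Q0 p.1.2 p.2 else @netB n m Q0 P0 p.1.2 p.2.
have okp p : [/\ is_cpnet (netBp p), acyclic (netBp p) & k_bounded k (netBp p)].
  rewrite /netBp; case: (p.1.1); [exact: netB_ok hPQ h0 h1 hk | exact: netB_ok hQP h0 h1 hk].
have pB p (v zP zQ : bool) (x y : 'I_m) (a b : nat) :
    nat_of_ord x = a -> nat_of_ord y = b ->
    pref (netBp p) (if v then Q0 else P0) (sq zP zQ) x y = prefB p v zP zQ a b.
  move=> ha hb; case: p => [[kd bp] b0]; rewrite /netBp /prefB /prefM /dirB /=.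
  by case: kd; case: v; case: zP; case: zQ;
    rewrite /= /ordRS /dirbit ha hb ?eqxx ?(negbTE hPQ) ?(negbTE hQP) ?sqP ?sqQ /= ?h0 ?h1.
have := checkB ((sq false false, sq true false) \in X) ((sq true false, sq true true) \in X)
               ((sq true true, sq false true) \in X) ((sq false true, sq false false) \in X).
case/hasP => c _ /hasP [p1 _ /hasP [p2 _ /and4P [e1 e2 e3 e4]]].
have [HN1 HA1 HK1] := okp p1.
have [HN2 HA2 HK2] := okp p2.
have [N [HN HA _ Hc]] := Hic _ _ (ex_intro _ _ (And4 HN1 HA1 HK1 erefl))
                                 (ex_intro _ _ (And4 HN2 HA2 HK2 erefl)).
have b1 := edge_lemma HN HN1 HA1 HN2 HA2 HX (esym Hc) (swP false).1 (agP false true false)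
  (pB p1 false true false _ _ _ _ (sqPv false false) (sqPv true false))
  (pB p2 false true false _ _ _ _ (sqPv false false) (sqPv true false)) e1.
have b2 := edge_lemma HN HN1 HA1 HN2 HA2 HX (esym Hc) (swQ true).1 (agQ true false true)
  (pB p1 true true true _ _ _ _ (sqQv true false) (sqQv true true))
  (pB p2 true true true _ _ _ _ (sqQv true false) (sqQv true true)) e2.
have b3 := edge_lemma HN HN1 HA1 HN2 HA2 HX (esym Hc) (swP true).2 (agP true false true)
  (pB p1 false false true _ _ _ _ (sqPv true true) (sqPv false true))
  (pB p2 false false true _ _ _ _ (sqPv true true) (sqPv false true)) e3.
have b4 := edge_lemma HN HN1 HA1 HN2 HA2 HX (esym Hc) (swQ false).2 (agQ false true false)
  (pB p1 true false false _ _ _ _ (sqQv false true) (sqQv false false))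
  (pB p2 true false false _ _ _ _ (sqQv false true) (sqQv false false)) e4.
have := consistent HN HA (sq false false).
case: c b1 b2 b3 b4 {e1 e2 e3 e4} => /= b1 b2 b3 b4.
  by rewrite (better_trans b1 (better_trans b2 (better_trans b3 b4))).
by rewrite (better_trans b4 (better_trans b3 (better_trans b2 b1))).
Qed.

Unset Implicit Arguments.

Theorem proposition6 (n m k : nat) :
  1 <= n -> 2 <= m -> k <= n - 1 -> (m, k) <> (2, 0) ->
  forall X : {set outcome n m * outcome n m},
    admissible_Xswap X -> ~ intersection_closed (C_ac k X).
Proof.
move=> Hn Hm Hk Hmk X HX.
have hm0 : 0 < m by apply: leq_trans Hm.
case: k Hk Hmk => [|k] Hk Hmk.
  have hm2 : 2 < m.
    rewrite ltn_neqAle Hm andbT; apply/eqP => e; subst m; exact: Hmk.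
  exact: (@caseA n m 0 X (Ordinal Hn) (Ordinal hm0) (Ordinal Hm) (Ordinal hm2)).
have hn1 : 1 < n by lia.
have hPQ : Ordinal Hn != Ordinal hn1 by [].
exact: (@caseB n m k.+1 X (Ordinal Hn) (Ordinal hn1) (Ordinal hm0) (Ordinal Hm) hPQ).
Qed.
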